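(* Let $V$ be a vertex operator algebra over $\mathbb{F}$, $n\ge 0$, and $0\le s\le t$ integers. For all $a,c\in V$ and homogeneous $b\in V$, both $a*_n(b\circ^s_{n,t}c)$ and $(b\circ^s_{n,t}c)*_na$ lie in $O_n(V)$. More precisely, for homogeneous $a,b,c$, $$a*_n(b\circ^s_{n,t}c)\equiv\sum_{m=0}^n(-1)^m\binom{m+n}{n}\sum_{j\ge0}\binom{\deg a+n}{j}\sum_{i\ge0}\binom{-n-m-1}{i}(a_{i+j}b)\circ^{\,i+n+1+s}_{n,\,n+m+1+i+t}\,c \pmod{O_n(V)},$$ and $\mathrm{Res}_{z}Y(a,z)(b\circ^s_{n,t}c)(1+z)^{\deg a-1}\equiv\sum_{j\ge0}\binom{\deg a-1}{j}(a_jb)\circ^s_{n,t}c\pmod{O_n(V)}$.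
   Context: Standing assumptions: $\mathbb{F}$ is an algebraically closed field with $\mathrm{char}\,\mathbb{F}\neq 2$. $V$ is a vertex operator algebra over $\mathbb{F}$: a $\mathbb{Z}$-graded vertex algebra $V=\bigoplus_k V_k$, $Y(v,z)=\sum_k v_kz^{-k-1}$, finite-dimensional graded pieces, $V_k=0$ for $k\ll0$, Virasoro vector $\omega\in V_2$, $Y(\omega,z)=\sum L(k)z^{-k-2}$, $u_kv\in V_{s+t-k-1}$ for $u\in V_s,v\in V_t$, Virasoro relations, $\frac{d}{dz}Y(v,z)=Y(L(-1)v,z)$, $L(0)|_{V_k}=k$. $\deg a=s$ for $a\in V_s$. $(1+z)^k=\sum_{i\ge0}\binom{k}{i}z^i$. For $n\ge0$, $0\le s\le t$, homogeneous $a$: $a\circ^s_{n,t}b=\mathrm{Res}_z\,Y(a,z)b\,\frac{(1+z)^{\deg a+n+s}}{z^{2n+2+t}}$ (extended linearly in $a$ when $a$ is a sum of homogeneous vectors). $O_n(V)$ is the span of all $a\circ^s_{n,t}b$ ($0\le s\le t$) and all $L(-1)a+L(0)a$. $a*_nb=\sum_{m=0}^n(-1)^m\binom{m+n}{n}\mathrm{Res}_z\,Y(a,z)b\frac{(1+z)^{\deg a+n}}{z^{n+m+1}}$ for homogeneous $a$, extended linearly. *)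

(* Defs.v *)
From HB Require Import structures.
From mathcomp Require Import all_boot all_order all_algebra.
From Stdlib Require Import ClassicalEpsilon.
Set Implicit Arguments. Unset Strict Implicit. Unset Printing Implicit Defensive.
Import Order.TTheory GRing.Theory Num.Theory.
Local Open Scope ring_scope.

(* Generalized binomial coefficient binom(r, i) for r an integer:
   binom(m, i) = 'C(m, i) for m >= 0,
   binom(-(m+1), i) = (-1)^i 'C(m+i, i). *)
Definition binz (r : int) (i : nat) : int :=
  match r with
  | Posz m => ('C(m, i))%:Z
  | Negz m => (-1) ^+ i * ('C(m + i, i))%:Z
  end.

Section Sums.
Variable M : nmodType.

(* Sum over i >= 0 of a finitely supported family (0 if not finitely supported). *)
Definition fsum (f : nat -> M) : M :=
  match excluded_middle_informative (exists N : nat, forall i, (N <= i)%N -> f i = 0) with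
  | left H => \sum_(i < proj1_sig (constructive_indefinite_description _ H)) f i
  | right _ => 0
  end.

(* Sum over k in Z of a finitely supported family (0 if not finitely supported). *)
Definition isum (g : int -> M) : M :=
  match excluded_middle_informative (exists s : seq int, forall k, k \notin s -> g k = 0) with
  | left H => \sum_(k <- undup (proj1_sig (constructive_indefinite_description _ H))) g k
  | right _ => 0
  end.
End Sums.

(* A vertex operator algebra structure on the F-vector space V.
   proj k = projection onto the graded piece V_k;  mode u k v = u_k v. *)
Record VOA (F : fieldType) (V : lmodType F) := {
  proj : int -> V -> V;
  proj_linear : forall k (a : F) (u v : V), proj k (a *: u + v) = a *: proj k u + proj k v;
  proj_proj : forall k l v, proj k (proj l v) = if k == l then proj l v else 0;
  proj_decomp : forall v, exists s : seq int,
      [/\ uniq s, v = \sum_(k <- s) proj k v & forall k, k \notin s -> proj k v = 0];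
  proj_findim : forall k, exists (m : nat) (e : 'I_m -> V),
      forall v, proj k v = v -> exists c : 'I_m -> F, v = \sum_(i < m) c i *: e i;
  proj_bounded : exists k0 : int, forall k v, k < k0 -> proj k v = 0;
  mode : V -> int -> V -> V;
  mode_linl : forall k (a : F) u u' v, mode (a *: u + u') k v = a *: mode u k v + mode u' k v;
  mode_linr : forall k (a : F) u v v', mode u k (a *: v + v') = a *: mode u k v + mode u k v';
  mode_trunc : forall u v, exists N : int, forall k, N <= k -> mode u k v = 0;
  vac : V;
  vac_deg : proj 0 vac = vac;
  vac_mode : forall k v, mode vac k v = if k == -1 then v else 0;
  mode_vac_m1 : forall u, mode u (-1) vac = u;
  mode_vac_pos : forall u k, 0 <= k -> mode u k vac = 0;
  borcherds : forall (p q r : int) u v w,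
      fsum (fun i => (binz p i)%:~R *: mode (mode u (r + i%:Z) v) (p + q - i%:Z) w)
    = fsum (fun i => ((-1) ^+ i * (binz r i)%:~R) *:
          (mode u (p + r - i%:Z) (mode v (q + i%:Z) w)
           - (-1) ^+ `|r|%N *: mode v (q + r - i%:Z) (mode u (p + i%:Z) w)));
  mode_deg : forall (s t k : int) u v, proj s u = u -> proj t v = v ->
      proj (s + t - k - 1) (mode u k v) = mode u k v;
  omega : V;
  omega_deg : proj 2 omega = omega;
  central_charge : F;
  (* L(m) = omega_(m+1);  [L(m),L(k)] = (m-k)L(m+k) + (m^3-m)/12 delta_{m+k,0} c,
     with (m^3-m)/12 written as binom(m+1,3)/2 *)
  virasoro : forall (m k : int) w,
      mode omega (m + 1) (mode omega (k + 1) w) - mode omega (k + 1) (mode omega (m + 1) w)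
    = (m - k)%:~R *: mode omega (m + k + 1) w
      + (if m + k == 0 then ((binz (m + 1) 3)%:~R / 2%:R * central_charge) *: w else 0);
  (* d/dz Y(v,z) = Y(L(-1)v,z), i.e. (L(-1)v)_k = -k v_(k-1) *)
  L_deriv : forall v k w, mode (mode omega 0 v) k w = - (k%:~R) *: mode v (k - 1) w;
  L0_grade : forall k v, proj k v = v -> mode omega 1 v = k%:~R *: v
}.

Section Ops.
Variables (F : fieldType) (V : lmodType F) (A : VOA V).

Definition Lop (k : int) (v : V) : V := mode A (omega A) (k + 1) v.

Definition homog (d : int) (v : V) : Prop := proj A d v = v.

(* Res_z Y(a,z) b (1+z)^K z^(-N) = sum_{j>=0} binom(K,j) a_(j-N) b *)
Definition resY (a b : V) (K N : int) : V :=
  fsum (fun j => (binz K j)%:~R *: mode A a (j%:Z - N) b).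

Definition lin_ext (f : int -> V -> V -> V) (a b : V) : V :=
  isum (fun k => f k (proj A k a) b).

Definition circ_h (n s t : nat) (d : int) (a b : V) : V :=
  resY a b (d + n%:Z + s%:Z) (2 * n%:Z + 2 + t%:Z).

Definition circ (n s t : nat) (a b : V) : V := lin_ext (circ_h n s t) a b.

Definition star_h (n : nat) (d : int) (a b : V) : V :=
  \sum_(m < n.+1) ((-1) ^+ m * ('C(m + n, n))%:R) *: resY a b (d + n%:Z) (n%:Z + m%:Z + 1).

Definition star (n : nat) (a b : V) : V := lin_ext (star_h n) a b.

Definition On_gen (n : nat) (x : V) : Prop :=
  (exists (a b : V) (s t : nat), (s <= t)%N /\ x = circ n s t a b)
  \/ (exists a : V, x = Lop (-1) a + Lop 0 a).

Definition On (n : nat) (v : V) : Prop :=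
  exists (m : nat) (c : 'I_m -> F) (g : 'I_m -> V),
    (forall i, On_gen n (g i)) /\ v = \sum_(i < m) c i *: g i.
End Ops.

(* Main.v *)
Require Import Defs.
From HB Require Import structures.
From mathcomp Require Import all_boot all_order all_algebra.
From mathcomp Require Import zify ring lra.
From Stdlib Require Import FunctionalExtensionality ClassicalEpsilon.
Import Order.TTheory GRing.Theory Num.Theory.
Local Open Scope ring_scope.

Definition ffz (x : int) (k : nat) : int := \prod_(i < k) (x - i%:Z).

Lemma ffz0 x : ffz x 0 = 1. Proof. by rewrite /ffz big_ord0. Qed.
Lemma ffzS x k : ffz x k.+1 = ffz x k * (x - k%:Z).
Proof. by rewrite /ffz big_ord_recr. Qed.

Lemma ffz_nat (m k : nat) : ffz m%:Z k = (m ^_ k)%:Z.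
Proof.
elim: k => [|k IH]; first by rewrite ffz0 ffactn0.
rewrite ffzS IH ffactnSr.
case: (leqP k m) => hk.
  by rewrite PoszM -subzn.
rewrite ffact_small //= mul0r; done.
Qed.

Lemma ffz_neg (m k : nat) : ffz (Negz m) k = (-1) ^+ k * ((m + k) ^_ k)%:Z.
Proof.
elim: k => [|k IH]; first by rewrite ffz0 ffactn0 expr0 mul1r.
rewrite ffzS IH addnS ffactSS NegzE exprS.
rewrite PoszM. 
have -> : Posz (m + k).+1 = (m%:Z + 1 + k%:Z) by rewrite -addn1 !PoszD; ring.
ring.
Qed.

Lemma binz_ffz x k : binz x k * (k`!)%:Z = ffz x k.
Proof.
case: x => m /=.
  by rewrite ffz_nat -PoszM bin_ffact.
rewrite ffz_neg -mulrA -PoszM.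
by rewrite bin_ffact.
Qed.

Lemma fact_neq0 k : (k`!)%:Z != 0.
Proof. by rewrite eqz_nat -lt0n fact_gt0. Qed.

Lemma binz0 x : binz x 0 = 1.
Proof. by case: x => m /=; rewrite ?bin0 ?expr0 ?mul1r. Qed.

Lemma binz_small (j p : nat) : (j < p)%N -> binz j%:Z p = 0.
Proof. by move=> h /=; rewrite bin_small. Qed.

Lemma binz_0n k : binz 0 k = (k == 0%N)%:R.
Proof. by case: k => [|k] /=; rewrite ?bin0 ?bin0n. Qed.

Lemma ffz_split x p q : ffz x (p + q) = ffz x p * ffz (x - p%:Z) q.
Proof.
elim: q => [|q IH]; first by rewrite addn0 ffz0 mulr1.
rewrite addnS !ffzS IH -mulrA; congr (_ * (_ * _)).
rewrite PoszD; ring.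
Qed.

Lemma ffz_add x y k :
  ffz (x + y) k = \sum_(i < k.+1) ('C(k, i))%:Z * (ffz x i * ffz y (k - i)).
Proof.
elim: k => [|k IH].
  by rewrite big_ord_recl big_ord0 !ffz0 bin0 !mulr1 addr0.
rewrite ffzS IH big_distrl /=.
have step : forall i : 'I_k.+1,
  'C(k, i)%:Z * (ffz x i * ffz y (k - i)) * (x + y - k%:Z)
  = 'C(k, i)%:Z * (ffz x i.+1 * ffz y (k - i))
    + 'C(k, i)%:Z * (ffz x i * ffz y (k.+1 - i)).
  move=> [i hi] /=.
  rewrite !ffzS subSn // ffzS.
  have -> : (k - i)%:Z = k%:Z - i%:Z by rewrite subzn.
  ring.
rewrite (eq_bigr _ (fun i _ => step i)) big_split /=.
rewrite [RHS]big_ord_recl /= bin0 subn0.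
rewrite [X in _ = _ + X](eq_bigr (fun i : 'I_k.+1 =>
   'C(k, i)%:Z * (ffz x i.+1 * ffz y (k - i)) +
   'C(k, i.+1)%:Z * (ffz x i.+1 * ffz y (k - i)))); last first.
  by move=> i _; rewrite /bump /= binS PoszD mulrDl subSS addrC.
rewrite big_split /=.
set S2 := (\sum_(i < k.+1) 'C(k, i)%:Z * (ffz x i * ffz y (k.+1 - i))).
set S3 := (\sum_(i < k.+1) 'C(k, i.+1)%:Z * (ffz x i.+1 * ffz y (k - i))).
have -> : S2 = ffz x 0 * ffz y k.+1 + S3.
  rewrite /S2 /S3 big_ord_recl /= bin0 mul1r subn0.
  rewrite [X in _ = _ + X]big_ord_recr /= bin_small //.
  rewrite (_ : forall v : int, (Posz 0) * v = 0); last by move=> v; rewrite mul0r.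
  rewrite addr0; congr (_ + _); apply: eq_bigr => i _.
ring.
Qed.

Lemma binz_add x y k :
  binz (x + y) k = \sum_(i < k.+1) binz x i * binz y (k - i).
Proof.
apply: (mulIf (fact_neq0 k)).
rewrite binz_ffz ffz_add big_distrl /=.
apply: eq_bigr => [[i hi]] _ /=.
rewrite -!binz_ffz.
rewrite -(bin_fact (n:=k) (m:=i)) // !PoszM.
ring.
Qed.

Lemma binz_rev x (j p : nat) : (p <= j)%N ->
  binz x j * ('C(j, p))%:Z = binz x p * binz (x - p%:Z) (j - p).
Proof.
move=> hpj.
apply: (mulIf (fact_neq0 j)).
transitivity ('C(j,p)%:Z * (binz x j * (j`!)%:Z)); first by ring.
rewrite binz_ffz (_ : ffz x j = ffz x (p + (j-p))); last by rewrite subnKC.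
rewrite ffz_split -!binz_ffz -(bin_fact hpj) !PoszM; ring.
Qed.

Set Implicit Arguments.
Unset Strict Implicit.
Section FS.
Variable M : nmodType.

Definition fsupp (f : nat -> M) (B : nat) := forall i, (B <= i)%N -> f i = 0.

Lemma fsupp_mono f B C : fsupp f B -> (B <= C)%N -> fsupp f C.
Proof. by move=> h hBC i hi; apply: h; apply: leq_trans hi. Qed.

Lemma sum_widen (f : nat -> M) (B C : nat) : fsupp f B -> (B <= C)%N ->
  \sum_(i < C) f i = \sum_(i < B) f i.
Proof.
move=> hf hBC; rewrite [RHS](big_ord_widen _ _ hBC) [RHS]big_mkcond /=.
apply: eq_bigr => i _; case: ifP => // /negbT; rewrite -leqNgt => h.
by rewrite hf.
Qed.

Lemma fsumE (f : nat -> M) B : fsupp f B -> fsum f = \sum_(i < B) f i.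
Proof.
move=> hf; rewrite /fsum; case: excluded_middle_informative => [H|H]; last first.
  by exfalso; apply: H; exists B.
case: (constructive_indefinite_description _ H) => N0 hN0 /=.
rewrite -(@sum_widen f N0 (maxn N0 B) hN0) ?leq_maxl //.
by rewrite (@sum_widen f B (maxn N0 B) hf) ?leq_maxr.
Qed.

Lemma fsum_ext (f g : nat -> M) : (forall i, f i = g i) -> fsum f = fsum g.
Proof. by move=> h; rewrite (functional_extensionality f g h). Qed.

Lemma fsum_add (f g : nat -> M) B : fsupp f B -> fsupp g B ->
  fsum (fun i => f i + g i) = fsum f + fsum g.
Proof.
move=> hf hg; rewrite (fsumE hf) (fsumE hg) (fsumE (B := B)) ?big_split //.
by move=> i hi; rewrite hf ?hg ?addr0.
Qed.

Lemma fsum0 : fsum (fun _ : nat => (0 : M)) = 0.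
Proof. by rewrite (fsumE (B := 0)) ?big_ord0. Qed.

Lemma fsum_big (I : Type) (r : seq I) (P : pred I) (f : I -> nat -> M) B :
  (forall k, fsupp (f k) B) ->
  fsum (fun i => \sum_(k <- r | P k) f k i) = \sum_(k <- r | P k) fsum (f k).
Proof.
move=> hf; rewrite (fsumE (B := B)); last first.
  by move=> i hi; rewrite big1 // => k _; rewrite hf.
rewrite exchange_big /=; apply: eq_bigr => k _.
by rewrite (fsumE (hf k)).
Qed.

Lemma fsum_exch (f : nat -> nat -> M) B :
  (forall i j, (B <= i)%N || (B <= j)%N -> f i j = 0) ->
  fsum (fun i => fsum (f i)) = fsum (fun j => fsum (fun i => f i j)).
Proof.
move=> hf.
have s1 : forall i, fsupp (f i) B by move=> i j hj; rewrite hf // hj orbT.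
have s2 : forall j, fsupp (fun i => f i j) B by move=> j i hi; rewrite hf // hi.
rewrite (fsumE (f := fun i => fsum (f i)) (B := B)); last first.
  by move=> i hi; rewrite (fsumE (s1 i)) big1 // => j _; rewrite hf // hi.
rewrite (fsumE (f := fun j => fsum (fun i => f i j)) (B := B)); last first.
  by move=> j hj; rewrite (fsumE (s2 j)) big1 // => i _; rewrite hf // hj orbT.
rewrite (eq_bigr (fun i : 'I_B => \sum_(j < B) f i j)); last first.
  by move=> i _; rewrite (fsumE (s1 i)).
rewrite exchange_big /=; apply: eq_bigr => j _.
by rewrite (fsumE (s2 j)).
Qed.

Lemma sum_shift (g : nat -> M) (p C : nat) :
  \sum_(k < C) (if (p <= k)%N then g (k - p)%N else 0) = \sum_(j < C - p) g j.
Proof.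
case: (leqP p C) => hpC.
  rewrite -(big_mkord xpredT (fun k => if (p <= k)%N then g (k - p)%N else 0)) -(big_mkord xpredT g) (big_cat_nat (leq0n p) hpC) /=.
  rewrite big_nat big1 ?add0r; last first.
    by move=> i /andP [_ hi]; rewrite leqNgt hi.
  rewrite -{1}(add0n p) big_addn /= big_nat [RHS]big_nat.
  by apply: eq_bigr => i _; rewrite leq_addl addnK.
rewrite big1; last by move=> i _; rewrite leqNgt (leq_trans (ltn_ord i) (ltnW hpC)).
have -> : (C - p = 0)%N by apply/eqP; rewrite subn_eq0 ltnW.
by rewrite big_ord0.
Qed.

Lemma fsum_shift (g : nat -> M) (p : nat) B : fsupp g B ->
  fsum (fun k => if (p <= k)%N then g (k - p)%N else 0) = fsum g.
Proof.
move=> hg; rewrite (fsumE hg) (fsumE (B := B + p)).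
  by rewrite sum_shift addnK.
move=> k hk; case: ifP => // _; apply: hg; rewrite leq_subRL //; last first.
  by apply: leq_trans hk; rewrite leq_addl.
by rewrite addnC.
Qed.

Lemma sum_tri (h : nat -> nat -> M) C :
  \sum_(k < C) \sum_(i < k.+1) h i (k - i)%N
  = \sum_(i < C) \sum_(j < C - i) h i j.
Proof.
elim: C => [|C IH]; first by rewrite !big_ord0.
rewrite big_ord_recr /= IH [RHS]big_ord_recr /=.
rewrite (_ : \sum_(i < C) \sum_(j < C.+1 - i) h i j
   = \sum_(i < C) (\sum_(j < C - i) h i j + h i (C - i)%N)); last first.
  apply: eq_bigr => i _; rewrite subSn; last by apply: ltnW.
  by rewrite big_ord_recr.
rewrite big_split /= -!addrA; congr (_ + _).
rewrite big_ord_recr /= subSn // subnn big_ord_recl big_ord0 addr0.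
by [].
Qed.

Lemma fsum_cauchy (h : nat -> nat -> M) B :
  (forall i j, (B <= i)%N || (B <= j)%N -> h i j = 0) ->
  fsum (fun k => \sum_(i < k.+1) h i (k - i)%N) = fsum (fun i => fsum (h i)).
Proof.
move=> hh.
have s1 : forall i, fsupp (h i) B by move=> i j hj; rewrite hh // hj orbT.
rewrite (fsumE (B := B + B)); last first.
  move=> k hk; rewrite big1 // => [[i hi]] _ /=; apply: hh.
  case: (leqP B i) => //= hiB; rewrite leq_subRL; last by rewrite -ltnS.
  by apply: leq_trans hk; rewrite leq_add2r ltnW.
rewrite (fsumE (f := fun i => fsum (h i)) (B := B)); last first.
  by move=> i hi; rewrite (fsumE (s1 i)) big1 // => j _; rewrite hh // hi.
rewrite sum_tri.
rewrite (sum_widen (f := fun i => \sum_(j < B + B - i) h i j) (B := B) (C := B + B)); last by rewrite leq_addr.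
  apply: eq_bigr => [[i hi]] _ /=; rewrite (fsumE (s1 i)).
  apply: sum_widen (s1 i) _; rewrite leq_subRL; last by apply: leq_trans (ltnW hi) (leq_addr _ _).
  by rewrite leq_add2r ltnW.
by move=> i hi; rewrite big1 // => j _; rewrite hh // hi.
Qed.

End FS.

Section FSL.
Variables (F : fieldType) (V : lmodType F).

Lemma fsum_scale (c : F) (f : nat -> V) B : fsupp f B ->
  fsum (fun i => c *: f i) = c *: fsum f.
Proof.
move=> hf; rewrite (fsumE hf) (fsumE (B := B)) ?scaler_sumr //.
by move=> i hi; rewrite hf ?scaler0.
Qed.

Lemma fsum_opp (f : nat -> V) B : fsupp f B -> fsum (fun i => - f i) = - fsum f.
Proof.
move=> hf; rewrite (fsumE hf) (fsumE (B := B)) ?sumrN //.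
by move=> i hi; rewrite hf ?oppr0.
Qed.

Lemma fsum_sub (f g : nat -> V) B : fsupp f B -> fsupp g B ->
  fsum (fun i => f i - g i) = fsum f - fsum g.
Proof.
move=> hf hg; rewrite (fsum_add (B := B)) ?(fsum_opp hg) //.
by move=> i hi; rewrite hg ?oppr0.
Qed.
End FSL.

Set Implicit Arguments.
Unset Strict Implicit.

Section Modes.
Variables (F : fieldType) (V : lmodType F) (A : VOA V).
Local Notation md := (mode A).

Lemma mode_addl u u' k v : md (u + u') k v = md u k v + md u' k v.
Proof. by have := mode_linl A k 1 u u' v; rewrite !scale1r. Qed.
Lemma mode_addr u k v v' : md u k (v + v') = md u k v + md u k v'.
Proof. by have := mode_linr A k 1 u v v'; rewrite !scale1r. Qed.
Lemma mode0l k v : md 0 k v = 0.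
Proof. have := mode_addl 0 0 k v; rewrite addr0 => h.
by have := congr1 (fun x => x - md 0 k v) h; rewrite addrK subrr => <-. Qed.
Lemma mode0r u k : md u k 0 = 0.
Proof. have := mode_addr u k 0 0; rewrite addr0 => h.
by have := congr1 (fun x => x - md u k 0) h; rewrite addrK subrr => <-. Qed.
Lemma mode_scalel (c : F) u k v : md (c *: u) k v = c *: md u k v.
Proof. by have := mode_linl A k c u 0 v; rewrite addr0 mode0l addr0. Qed.
Lemma mode_scaler (c : F) u k v : md u k (c *: v) = c *: md u k v.
Proof. by have := mode_linr A k c u v 0; rewrite addr0 mode0r addr0. Qed.
Lemma mode_oppl u k v : md (- u) k v = - md u k v.
Proof. by rewrite -scaleN1r mode_scalel scaleN1r. Qed.
Lemma mode_oppr u k v : md u k (- v) = - md u k v.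
Proof. by rewrite -scaleN1r mode_scaler scaleN1r. Qed.
Lemma mode_subl u u' k v : md (u - u') k v = md u k v - md u' k v.
Proof. by rewrite mode_addl mode_oppl. Qed.
Lemma mode_subr u k v v' : md u k (v - v') = md u k v - md u k v'.
Proof. by rewrite mode_addr mode_oppr. Qed.

Lemma mode_suml (I : Type) (r : seq I) (P : pred I) (f : I -> V) k v :
  md (\sum_(i <- r | P i) f i) k v = \sum_(i <- r | P i) md (f i) k v.
Proof.
elim/big_rec2: _ => [|i x y _ <-]; first by rewrite mode0l.
by rewrite mode_addl.
Qed.
Lemma mode_sumr (I : Type) (r : seq I) (P : pred I) (f : I -> V) u k :
  md u k (\sum_(i <- r | P i) f i) = \sum_(i <- r | P i) md u k (f i).
Proof.
elim/big_rec2: _ => [|i x y _ <-]; first by rewrite mode0r.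
by rewrite mode_addr.
Qed.

Lemma mode_fsumr (f : nat -> V) B u k : fsupp f B ->
  md u k (fsum f) = fsum (fun i => md u k (f i)).
Proof.
move=> hf; rewrite (fsumE hf) (fsumE (B := B)) ?mode_sumr //.
by move=> i hi; rewrite hf ?mode0r.
Qed.
Lemma mode_fsuml (f : nat -> V) B v k : fsupp f B ->
  md (fsum f) k v = fsum (fun i => md (f i) k v).
Proof.
move=> hf; rewrite (fsumE hf) (fsumE (B := B)) ?mode_suml //.
by move=> i hi; rewrite hf ?mode0l.
Qed.

Lemma truncN u v : exists T : nat, forall k : int, T%:Z <= k -> md u k v = 0.
Proof.
have [N hN] := mode_trunc A u v.
exists `|N|%N => k hk; apply: hN; apply: le_trans hk.
exact: lez_abs.
Qed.

Lemma truncU u (x : nat -> V) (I : nat) :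
  exists T : nat, forall i k, (i < I)%N -> T%:Z <= k -> md u k (x i) = 0.
Proof.
elim: I => [|I [T hT]]; first by exists 0%N.
have [T' hT'] := truncN u (x I).
exists (maxn T T') => i k hi hk.
rewrite ltnS leq_eqVlt in hi; case/orP: hi => [/eqP ->|hi].
  apply: hT'; apply: le_trans hk; rewrite lez_nat leq_maxr //.
apply: hT => //; apply: le_trans hk; rewrite lez_nat leq_maxl //.
Qed.

Lemma truncUl (y : nat -> V) v (I : nat) :
  exists T : nat, forall i k, (i < I)%N -> T%:Z <= k -> md (y i) k v = 0.
Proof.
elim: I => [|I [T hT]]; first by exists 0%N.
have [T' hT'] := truncN (y I) v.
exists (maxn T T') => i k hi hk.
rewrite ltnS leq_eqVlt in hi; case/orP: hi => [/eqP ->|hi].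
  apply: hT'; apply: le_trans hk; rewrite lez_nat leq_maxr //.
apply: hT => //; apply: le_trans hk; rewrite lez_nat leq_maxl //.
Qed.

Lemma commutator u v w (p q : int) :
  md u p (md v q w) - md v q (md u p w)
  = fsum (fun i => (binz p i)%:~R *: md (md u i%:Z v) (p + q - i%:Z) w).
Proof.
have := borcherds A p q 0 u v w.
rewrite (@fsumE _ (fun i => ((-1) ^+ i * (binz 0 i)%:~R) *: _) 1); last first.
  by move=> i hi; rewrite binz_0n eqn0Ngt hi /= mulr0 scale0r.
rewrite big_ord_recl big_ord0 addr0 /= expr0 mul1r bin0 scale1r scale1r.
have e1 : p + 0 - (Posz 0) = p by ring.
have e2 : q + (Posz 0) = q by ring.
have e3 : q + 0 - (Posz 0) = q by ring.
have e4 : p + (Posz 0) = p by ring.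
rewrite e1 e3 e2 e4 => <-; apply: fsum_ext => i; by rewrite add0r.
Qed.

End Modes.

Set Implicit Arguments.
Unset Strict Implicit.

Section Pure.
Variables (F : fieldType) (V : lmodType F).

Lemma vander_sum (x y : int) (Y : nat -> V) (C0 D1 D2 D3 : nat) :
  (forall i, (C0 <= i)%N -> Y i = 0) ->
  (C0 <= D1)%N -> (C0 <= D2)%N -> (C0 <= D3)%N ->
  \sum_(i < D1) (binz (x + y) i)%:~R *: Y i
  = \sum_(p < D2) (binz x p)%:~R *: \sum_(q < D3) (binz y q)%:~R *: Y (p + q)%N.
Proof.
move=> hY h1 h2 h3.
pose h p q := ((binz x p)%:~R * (binz y q)%:~R) *: Y (p + q)%N.
have hh : forall p q, (C0 <= p + q)%N -> h p q = 0 by move=> p q hpq; rewrite /h hY ?scaler0.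
transitivity (\sum_(i < D1) \sum_(p < i.+1) h p (i - p)%N).
  apply: eq_bigr => [[i hi]] _ /=.
  rewrite binz_add rmorph_sum /= scaler_suml; apply: eq_bigr => [[p hp]] _ /=.
  by rewrite /h rmorphM /= subnKC // -ltnS.
rewrite sum_tri.
have s1 : forall p, fsupp (h p) (C0 - p)%N.
  move=> p q hq; apply: hh; case: (leqP C0 p) => hp; first by apply: leq_trans hp (leq_addr _ _).
  by rewrite -leq_subLR.
have s2 : fsupp (fun p => \sum_(q < C0 - p) h p q) C0.
  move=> p hp; have -> : (C0 - p = 0)%N by apply/eqP; rewrite subn_eq0.
  by rewrite big_ord0.
rewrite (sum_widen (f := fun p => \sum_(q < D1 - p) h p q) (B := C0)) //; last first.
  move=> p hp; rewrite big1 // => q _; apply: hh; apply: leq_trans hp (leq_addr _ _).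
rewrite (sum_widen (f := fun p => (binz x p)%:~R *: \sum_(q < D3) (binz y q)%:~R *: Y (p + q)%N) (B := C0)) //; last first.
  move=> p hp; rewrite big1 ?scaler0 // => q _; rewrite hY ?scaler0 //; apply: leq_trans hp (leq_addr _ _).
apply: eq_bigr => [[p hp]] _ /=.
rewrite (sum_widen (s1 p)); last by apply: leq_sub2r.
rewrite (sum_widen (f := fun q => (binz y q)%:~R *: Y (p + q)%N) (B := C0 - p)); last by apply: leq_trans (leq_subr _ _) h3.
  by rewrite scaler_sumr; apply: eq_bigr => q _; rewrite /h scalerA.
move=> q hq; rewrite hY ?scaler0 //.
case: (leqP C0 p) => hp'; first by apply: leq_trans hp' (leq_addr _ _).
by rewrite -leq_subLR.
Qed.

Lemma rev_shift (K : int) (p D : nat) (G : nat -> V) : (p <= D)%N ->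
  \sum_(j1 < D) ((binz K j1)%:~R * (binz j1%:Z p)%:~R) *: G j1
  = (binz K p)%:~R *: \sum_(e < D - p) (binz (K - p%:Z) e)%:~R *: G (p + e)%N.
Proof.
move=> hpD.
rewrite -(sum_shift (fun e => (binz (K - p%:Z) e)%:~R *: G (p + e)%N)) scaler_sumr; apply: eq_bigr => [[j hj]] _ /=.
case: (leqP p j) => hpj.
  rewrite -rmorphM /= binz_rev // rmorphM /= -scalerA subnKC //.
by rewrite bin_small // mulr0 scale0r scaler0.
Qed.

End Pure.

Section Pure2.
Variables (F : fieldType) (V : lmodType F).

Lemma sum4_exch (C D : nat) (T : nat -> nat -> nat -> nat -> V) :
  \sum_(p < C) \sum_(q < C) \sum_(j1 < D) \sum_(j2 < D) T p q j1 j2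
  = \sum_(j1 < D) \sum_(j2 < D) \sum_(p < C) \sum_(q < C) T p q j1 j2.
Proof.
transitivity (\sum_(p < C) \sum_(j1 < D) \sum_(q < C) \sum_(j2 < D) T p q j1 j2).
  by apply: eq_bigr => p _; rewrite exchange_big.
rewrite exchange_big /=; apply: eq_bigr => j1 _.
transitivity (\sum_(p < C) \sum_(j2 < D) \sum_(q < C) T p q j1 j2).
  by apply: eq_bigr => p _; rewrite exchange_big.
by rewrite exchange_big.
Qed.

Lemma PL (X : nat -> int -> V) (C : nat) (K b : int) (M N D : nat) :
  (forall i L, (C <= i)%N -> X i L = 0) ->
  (forall i L, C%:Z <= L -> X i L = 0) ->
  (M + N + 3 * C <= D)%N ->
  \sum_(j1 < D) \sum_(j2 < D) ((binz K j1)%:~R * (binz b j2)%:~R) *: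
     \sum_(i < C) (binz (j1%:Z - M%:Z) i)%:~R *:
        X i (j1%:Z + j2%:Z - M%:Z - N%:Z - i%:Z)
  = \sum_(p < C) (binz K p)%:~R *: \sum_(q < C) (binz (- M%:Z) q)%:~R *:
      \sum_(j < D) (binz (b + K - p%:Z) j)%:~R *: X (q + p)%N (j%:Z - (N + M + q)%:Z).
Proof.
move=> hX1 hX2 hD.
pose T p q j1 j2 := ((binz K j1)%:~R * (binz b j2)%:~R * (binz j1%:Z p)%:~R * (binz (- M%:Z) q)%:~R)
   *: X (q + p)%N (j1%:Z + j2%:Z - M%:Z - N%:Z - (p + q)%:Z).
transitivity (\sum_(j1 < D) \sum_(j2 < D) \sum_(p < C) \sum_(q < C) T p q j1 j2).
  apply: eq_bigr => j1 _; apply: eq_bigr => j2 _.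
  rewrite (@vander_sum _ _ j1%:Z (- M%:Z) (fun i => X i (j1%:Z + j2%:Z - M%:Z - N%:Z - i%:Z)) C C C C) //; last first.
    by move=> i hi; rewrite hX1.
  rewrite scaler_sumr; apply: eq_bigr => p _.
  rewrite scalerA scaler_sumr; apply: eq_bigr => q _.
  by rewrite scalerA /T addnC.
rewrite -sum4_exch; apply: eq_bigr => [[p hp]] _ /=.
rewrite scaler_sumr; apply: eq_bigr => [[q hq]] _ /=.
rewrite scalerA [X in _ = X *: _]mulrC -scalerA.
pose Z j := X (q + p)%N (j%:Z - (N + M + q)%:Z).
have hZ : forall j, (M + N + 2 * C <= j)%N -> Z j = 0.
  move=> j hj; apply: hX2.
  lia.
have e1 : forall j1 j2 : nat, T p q j1 j2 =
    (binz (- M%:Z) q)%:~R *: (((binz K j1)%:~R * (binz j1%:Z p)%:~R) *: ((binz b j2)%:~R *: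
     (if (p <= j1)%N then Z ((j1 - p) + j2)%N else 0))).
  move=> j1 j2; rewrite /T !scalerA; case: (leqP p j1) => hpj.
    congr (_ *: _); first by ring.
    rewrite /Z; congr (X _ _).
    lia.
  by rewrite (binz_small _ _ hpj) scaler0 mulr0z !mulr0 mul0r scale0r.
transitivity ((binz (- M%:Z) q)%:~R *: \sum_(j1 < D) ((binz K j1)%:~R * (binz j1%:Z p)%:~R) *:
    \sum_(j2 < D) (binz b j2)%:~R *: (if (p <= j1)%N then Z ((j1 - p) + j2)%N else 0)).
  rewrite scaler_sumr; apply: eq_bigr => j1 _; rewrite scaler_sumr scaler_sumr; apply: eq_bigr => j2 _.
  by rewrite e1 -!scalerA.
congr (_ *: _).
rewrite (@rev_shift _ _ K p D (fun j1 => \sum_(j2 < D) (binz b j2)%:~R *: (if (p <= j1)%N then Z (j1 - p + j2)%N else 0))); last by lia.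
congr (_ *: _).
rewrite (_ : b + K - p%:Z = b + (K - p%:Z)); last by ring.
rewrite (@vander_sum _ _ b (K - p%:Z) Z (M + N + 2 * C) D D (D - p)) //; try lia.
rewrite [RHS](eq_bigr (fun j2 : 'I_D => \sum_(e < D - p) ((binz b j2)%:~R * (binz (K - p%:Z) e)%:~R) *: Z (j2 + e)%N)); last first.
  by move=> j2 _; rewrite scaler_sumr; apply: eq_bigr => e _; rewrite scalerA.
rewrite [RHS]exchange_big /=; apply: eq_bigr => e _.
rewrite scaler_sumr; apply: eq_bigr => j2 _.
by rewrite leq_addr addKn scalerA [X in X *: _ = _]mulrC addnC.
Qed.

End Pure2.

Section Pure3.
Variables (F : fieldType) (V : lmodType F).

Lemma PR (Y : nat -> int -> V) (C : nat) (b E : int) (M D : nat) :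
  (forall i L, (C <= i)%N -> Y i L = 0) ->
  (forall i L, C%:Z <= L -> Y i L = 0) ->
  (M + 2 * C <= D)%N ->
  \sum_(p < D) \sum_(e < D) ((binz b p)%:~R * (binz (E - b) e)%:~R) *:
     \sum_(i < C) (binz p%:Z i)%:~R *: Y i (p%:Z + (e%:Z - M%:Z) - i%:Z)
  = \sum_(j < C) (binz b j)%:~R *: \sum_(l < D) (binz (E - j%:Z) l)%:~R *: Y j (l%:Z - M%:Z).
Proof.
move=> hY1 hY2 hD.
transitivity (\sum_(i < C) \sum_(p < D) ((binz b p)%:~R * (binz p%:Z i)%:~R) *:
   \sum_(e < D) (binz (E - b) e)%:~R *: Y i (p%:Z + (e%:Z - M%:Z) - i%:Z)).
  rewrite (eq_bigr (fun p : 'I_D => \sum_(i < C) \sum_(e < D) ((binz b p)%:~R * (binz p%:Z i)%:~R * (binz (E - b) e)%:~R) *: Y i (p%:Z + (e%:Z - M%:Z) - i%:Z))); last first.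
    move=> p _; rewrite (eq_bigr (fun e : 'I_D => \sum_(i < C) ((binz b p)%:~R * (binz p%:Z i)%:~R * (binz (E - b) e)%:~R) *: Y i (p%:Z + (e%:Z - M%:Z) - i%:Z))); last first.
      move=> e _; rewrite scaler_sumr; apply: eq_bigr => i _; rewrite scalerA; congr (_ *: _); ring.
    by rewrite exchange_big.
  rewrite exchange_big /=; apply: eq_bigr => i _; apply: eq_bigr => p _.
  by rewrite scaler_sumr; apply: eq_bigr => e _; rewrite scalerA.
apply: eq_bigr => [[i hi]] _ /=.
rewrite (@rev_shift _ _ b i D (fun p => \sum_(e < D) (binz (E - b) e)%:~R *: Y i (p%:Z + (e%:Z - M%:Z) - i%:Z))); last by lia.
congr (_ *: _).
pose Z l := Y i (l%:Z - M%:Z).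
rewrite (_ : E - i%:Z = (b - i%:Z) + (E - b)); last by ring.
rewrite (@vander_sum _ _ (b - i%:Z) (E - b) Z (M + C) D (D - i) D); last by lia.
- apply: eq_bigr => p' _; congr (_ *: _); apply: eq_bigr => e _; congr (_ *: _).
  by rewrite /Z; congr (Y _ _); rewrite !PoszD; ring.
- move=> l hl; apply: hY2; lia.
- by lia.
- by lia.
Qed.
End Pure3.

Set Implicit Arguments.
Unset Strict Implicit.

Section Lid.
Variables (F : fieldType) (V : lmodType F) (A : VOA V).
Local Notation md := (mode A).

Lemma resY_fin (a b : V) (K N : int) (D : nat) :
  (forall j : nat, (D <= j)%N -> md a (j%:Z - N) b = 0) ->
  resY A a b K N = \sum_(j < D) (binz K j)%:~R *: md a (j%:Z - N) b.
Proof.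
move=> h; rewrite /resY (fsumE (B := D)) // => j hj; by rewrite h ?scaler0.
Qed.

Lemma truncF (u : V) (x : nat -> V) (B : nat) : fsupp x B ->
  exists T : nat, forall i (k : int), T%:Z <= k -> md u k (x i) = 0.
Proof.
move=> hx; have [T hT] := truncU A u x B.
exists T => i k hk; case: (ltnP i B) => hi; first by apply: hT.
by rewrite hx // mode0r.
Qed.

Lemma truncFl (y : nat -> V) (v : V) (B : nat) : fsupp y B ->
  exists T : nat, forall i (k : int), T%:Z <= k -> md (y i) k v = 0.
Proof.
move=> hy; have [T hT] := truncUl A y v B.
exists T => i k hk; case: (ltnP i B) => hi; first by apply: hT.
by rewrite hy // mode0l.
Qed.

Lemma fsupp_mode (u v : V) (N : nat) : exists B, fsupp (fun j => md u (j%:Z - N%:Z) v) B.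
Proof.
have [T hT] := truncN A u v.
exists (T + N)%N => j hj; apply: hT; lia.
Qed.

Lemma fsupp_mode0 (u v : V) : exists B, fsupp (fun j => md u j%:Z v) B.
Proof.
have [T hT] := truncN A u v.
exists T => j hj; apply: hT; lia.
Qed.

Lemma Lid (a b c : V) (K bt : int) (M N : nat) :
  resY A a (resY A b c bt N%:Z) K M%:Z
  = resY A b (resY A a c K M%:Z) bt N%:Z
    + fsum (fun p => (binz K p)%:~R *: fsum (fun q => (binz (- M%:Z) q)%:~R *:
        resY A (md a (q + p)%N%:Z b) c (bt + K - p%:Z) (N + M + q)%N%:Z)).
Proof.
pose X i L := md (md a i%:Z b) L c.
have [Ca hCa] := fsupp_mode0 a b.
have [TX hTX] := truncFl c hCa.
set C := maxn Ca TX.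
have hX1 : forall i L, (C <= i)%N -> X i L = 0.
  by move=> i L hi; rewrite /X hCa ?mode0l //; apply: leq_trans hi; rewrite leq_maxl.
have hX2 : forall i L, C%:Z <= L -> X i L = 0.
  move=> i L hL; apply: hTX; apply: le_trans hL; rewrite lez_nat leq_maxr //.
have [B1 hB1] := fsupp_mode b c N.
have [T2 hT2] := truncF a hB1.
have [B3 hB3] := fsupp_mode a c M.
have [T4 hT4] := truncF b hB3.
set D := (M + N + 3 * C + B1 + T2 + M + B3 + T4 + N)%N.
have v1 : forall j2, (D <= j2)%N -> md b (j2%:Z - N%:Z) c = 0.
  move=> j2 hj; apply: hB1; rewrite /D in hj; lia.
have v2 : forall j1 j2, (D <= j1)%N -> md a (j1%:Z - M%:Z) (md b (j2%:Z - N%:Z) c) = 0.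
  move=> j1 j2 hj; apply: hT2; rewrite /D in hj; lia.
have v3 : forall j1, (D <= j1)%N -> md a (j1%:Z - M%:Z) c = 0.
  move=> j1 hj; apply: hB3; rewrite /D in hj; lia.
have v4 : forall j1 j2, (D <= j2)%N -> md b (j2%:Z - N%:Z) (md a (j1%:Z - M%:Z) c) = 0.
  move=> j1 j2 hj; apply: hT4; rewrite /D in hj; lia.
rewrite (@resY_fin b c bt N D v1).
rewrite (@resY_fin a (\sum_(j < D) _) K M D); last first.
  move=> j1 hj1; rewrite mode_sumr big1 // => j2 _; by rewrite mode_scaler v2 // scaler0.
rewrite (@resY_fin a c K M D v3).
rewrite (@resY_fin b (\sum_(j < D) _) bt N D); last first.
  move=> j2 hj2; rewrite mode_sumr big1 // => j1 _; by rewrite mode_scaler v4 // scaler0.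
have eR : forall p q, resY A (md a (q + p)%N%:Z b) c (bt + K - p%:Z) (N + M + q)%N%:Z
   = \sum_(j < D) (binz (bt + K - p%:Z) j)%:~R *: X (q + p)%N (j%:Z - (N + M + q)%:Z).
  move=> p q; apply: resY_fin => j hj.
  case: (leqP C (q + p)) => hqp; first by apply: hX1.
  apply: hX2; rewrite /D in hj; lia.
rewrite (fsum_ext (g := fun p => (binz K p)%:~R *: fsum (fun q => (binz (- M%:Z) q)%:~R *:
   \sum_(j < D) (binz (bt + K - p%:Z) j)%:~R *: X (q + p)%N (j%:Z - (N + M + q)%:Z)))); last first.
  by move=> p; congr (_ *: _); apply: fsum_ext => q; rewrite eR.
rewrite (fsumE (B := C)); last first.
  move=> p hp; rewrite (fsumE (B := 0)) ?big_ord0 ?scaler0 //.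
  move=> q _; rewrite big1 ?scaler0 // => j _; rewrite hX1 ?scaler0 //; lia.
rewrite (eq_bigr (fun p : 'I_C => (binz K p)%:~R *: \sum_(q < C) (binz (- M%:Z) q)%:~R *:
   \sum_(j < D) (binz (bt + K - p%:Z) j)%:~R *: X (q + p)%N (j%:Z - (N + M + q)%:Z))); last first.
  move=> p _; congr (_ *: _); apply: fsumE => q hq.
  rewrite big1 ?scaler0 // => j _; rewrite hX1 ?scaler0 //; lia.
rewrite -(@PL _ _ X C K bt M N D hX1 hX2); last by rewrite /D; lia.
apply/eqP; rewrite addrC -subr_eq; apply/eqP.
rewrite (eq_bigr (fun j1 : 'I_D => \sum_(j2 < D) ((binz K j1)%:~R * (binz bt j2)%:~R) *:
     md a (j1%:Z - M%:Z) (md b (j2%:Z - N%:Z) c))); last first.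
  move=> j1 _; rewrite mode_sumr scaler_sumr; apply: eq_bigr => j2 _.
  by rewrite mode_scaler scalerA.
rewrite [X in _ - X](eq_bigr (fun j2 : 'I_D => \sum_(j1 < D) ((binz K j1)%:~R * (binz bt j2)%:~R) *:
     md b (j2%:Z - N%:Z) (md a (j1%:Z - M%:Z) c))); last first.
  move=> j2 _. rewrite mode_sumr scaler_sumr; apply: eq_bigr => j1 _.
  by rewrite mode_scaler scalerA mulrC.
rewrite [X in _ - X]exchange_big /= -sumrB; apply: eq_bigr => j1 _.
rewrite -sumrB; apply: eq_bigr => j2 _.
rewrite -scalerBr commutator; congr (_ *: _).
rewrite (fsumE (B := C)); last by move=> i hi; rewrite hCa ?mode0l ?scaler0 //; apply: leq_trans hi; rewrite leq_maxl.
apply: eq_bigr => i _; congr (_ *: _).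
rewrite /X; congr (md _ _ _); ring.
Qed.

End Lid.

Set Implicit Arguments.
Unset Strict Implicit.

Section Rid.
Variables (F : fieldType) (V : lmodType F) (A : VOA V).
Local Notation md := (mode A).

Lemma Rid (a b c : V) (bt E : int) (M N : nat) :
  fsum (fun j => (binz bt j)%:~R *: resY A (md b (j%:Z - N%:Z) c) a (E - j%:Z) M%:Z)
  = fsum (fun i => ((-1) ^+ i * (binz (- N%:Z) i)%:~R) *:
      (resY A b (resY A c a (E - bt) (M%:Z - i%:Z)) bt (N + i)%N%:Z
       - (-1) ^+ N *: resY A c (resY A b a bt (- i%:Z)) (E - bt) (M + N + i)%N%:Z)).
Proof.
pose Y j L := md (md b (j%:Z - N%:Z) c) L a.
have [B1 hB1] := fsupp_mode A b c N.
have [TY hTY] := truncFl A a hB1.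
set C := maxn B1 TY.
have hY1 : forall i L, (C <= i)%N -> Y i L = 0.
  by move=> i L hi; rewrite /Y hB1 ?mode0l //; apply: leq_trans hi; rewrite leq_maxl.
have hY2 : forall i L, C%:Z <= L -> Y i L = 0.
  move=> i L hL; apply: hTY; apply: le_trans hL; rewrite lez_nat leq_maxr //.
have [Tc hTc] := fsupp_mode A c a M.
have [Tba hTba] := fsupp_mode0 A b a.
set I := (Tc + Tba)%N.
have [Tb' hTb'] := truncF A b hTc.
have [Tc' hTc'] := truncF A c hTba.
set D := (M + 2 * C + Tc + Tb' + N + I + Tba + Tc' + M + N)%N.
have w1 : forall e i : nat, (Tc <= e + i)%N -> md c ((e + i)%N%:Z - M%:Z) a = 0 by move=> e i h; apply: hTc.
have w2 : forall p i : nat, (Tba <= p + i)%N -> md b (p + i)%N%:Z a = 0 by move=> p i h; apply: hTba.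
rewrite (fsumE (B := C)); last first.
  move=> j hj; rewrite /resY (fsumE (B := 0)) ?big_ord0 ?scaler0 // => l _.
  by rewrite hB1 ?mode0l ?scaler0 //; apply: leq_trans hj; rewrite leq_maxl.
rewrite (eq_bigr (fun j : 'I_C => (binz bt j)%:~R *: \sum_(l < D) (binz (E - j%:Z) l)%:~R *: Y j (l%:Z - M%:Z))); last first.
  move=> j _; congr (_ *: _); apply: resY_fin => l hl; apply: hY2; rewrite /D in hl; lia.
rewrite -(@PR _ _ Y C bt E M D hY1 hY2); last by rewrite /D; lia.
have Bor : forall p e : nat,
   \sum_(i < C) (binz p%:Z i)%:~R *: Y i (p%:Z + (e%:Z - M%:Z) - i%:Z)
   = \sum_(i < I) ((-1) ^+ i * (binz (- N%:Z) i)%:~R) *: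
       (md b (p%:Z - (N + i)%N%:Z) (md c (e%:Z - (M%:Z - i%:Z)) a)
        - (-1) ^+ N *: md c (e%:Z - (M + N + i)%N%:Z) (md b (p + i)%N%:Z a)).
  move=> p e.
  have := borcherds A p%:Z (e%:Z - M%:Z) (- N%:Z) b c a.
  rewrite (fsumE (B := C)); last by move=> i hi; rewrite (_ : - N%:Z + i%:Z = i%:Z - N%:Z) ?hB1 ?mode0l ?scaler0 //;
     [apply: leq_trans hi; rewrite leq_maxl | ring].
  rewrite (fsumE (B := I)); last first.
    move=> i hi; rewrite (_ : e%:Z - M%:Z + i%:Z = (e + i)%N%:Z - M%:Z); last by rewrite PoszD; ring.
    rewrite w1 ?mode0r; last by rewrite /I in hi; lia.
    rewrite (_ : p%:Z + i%:Z = (p + i)%N%:Z) // w2 ?mode0r ?scaler0 ?subr0 ?scaler0 //.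
    rewrite /I in hi; lia.
  move=> h; rewrite (eq_bigr (fun i : 'I_C => (binz p i)%:~R *: md (md b (- N%:Z + i%:Z) c) (p%:Z + (e%:Z - M%:Z) - i%:Z) a)); last first.
    by move=> i _; rewrite /Y; congr (_ *: md (md b _ c) _ a); ring.
  rewrite h; apply: eq_bigr => i _; congr (_ *: _).
  have -> : `|- N%:Z|%N = N by rewrite abszN.
  congr (md b _ (md c _ a) - _ *: md c _ (md b _ a)); rewrite ?PoszD; ring.
rewrite (eq_bigr (fun p : 'I_D => \sum_(e < D) ((binz bt p)%:~R * (binz (E - bt) e)%:~R) *:
   \sum_(i < I) ((-1) ^+ i * (binz (- N%:Z) i)%:~R) *:
       (md b (p%:Z - (N + i)%N%:Z) (md c (e%:Z - (M%:Z - i%:Z)) a)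
        - (-1) ^+ N *: md c (e%:Z - (M + N + i)%N%:Z) (md b (p + i)%N%:Z a)))); last first.
  by move=> p _; apply: eq_bigr => e _; rewrite Bor.
rewrite (fsumE (B := I)); last first.
  move=> i hi.
  rewrite (_ : resY A c a (E - bt) (M%:Z - i%:Z) = 0); last first.
    rewrite /resY (fsumE (B := 0)) ?big_ord0 // => e _.
    rewrite (_ : e%:Z - (M%:Z - i%:Z) = (e + i)%N%:Z - M%:Z); last by rewrite PoszD; ring.
    by rewrite w1 ?scaler0 //; rewrite /I in hi; lia.
  rewrite (_ : resY A b a bt (- i%:Z) = 0); last first.
    rewrite /resY (fsumE (B := 0)) ?big_ord0 // => p _.
    rewrite (_ : p%:Z - - i%:Z = (p + i)%N%:Z); last by rewrite PoszD; ring.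
    by rewrite w2 ?scaler0 //; rewrite /I in hi; lia.
  rewrite /resY (fsumE (B := 0)) ?big_ord0; last by move=> p _; rewrite mode0r scaler0.
  rewrite (fsumE (B := 0)) ?big_ord0 ?scaler0 ?subr0 ?scaler0 //; by move=> e _; rewrite mode0r scaler0.
pose T1 p e i := md b (p%:Z - (N + i)%N%:Z) (md c (e%:Z - (M%:Z - i%:Z)) a).
pose T2 p e i := md c (e%:Z - (M + N + i)%N%:Z) (md b (p + i)%N%:Z a).
pose cf p e := ((binz bt p)%:~R * (binz (E - bt) e)%:~R) : F.
pose sg i := ((-1) ^+ i * (binz (- N%:Z) i)%:~R) : F.
transitivity (\sum_(i < I) sg i *: \sum_(p < D) \sum_(e < D) cf p e *: (T1 p e i - (-1) ^+ N *: T2 p e i)).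
  rewrite (eq_bigr (fun p : 'I_D => \sum_(e < D) \sum_(i < I) (sg i * cf p e) *: (T1 p e i - (-1) ^+ N *: T2 p e i))); last first.
    move=> p _; apply: eq_bigr => e _; rewrite scaler_sumr; apply: eq_bigr => i _.
    by rewrite scalerA mulrC.
  rewrite (eq_bigr (fun p : 'I_D => \sum_(i < I) \sum_(e < D) (sg i * cf p e) *: (T1 p e i - (-1) ^+ N *: T2 p e i))); last first.
    by move=> p _; rewrite exchange_big.
  rewrite exchange_big /=; apply: eq_bigr => i _.
  rewrite scaler_sumr; apply: eq_bigr => p _; rewrite scaler_sumr; apply: eq_bigr => e _.
  by rewrite scalerA.
apply: eq_bigr => [[i hi]] _ /=; congr (_ *: _).
rewrite (@resY_fin _ _ A c a (E - bt) (M%:Z - i%:Z) D); last first.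
  move=> e he; rewrite (_ : e%:Z - (M%:Z - i%:Z) = (e + i)%N%:Z - M%:Z); last by rewrite PoszD; ring.
  by rewrite w1 //; rewrite /D /I in he; lia.
rewrite (@resY_fin _ _ A b (\sum_(e < D) _) bt (N + i)%N%:Z D); last first.
  move=> p hp; rewrite mode_sumr big1 // => e _; rewrite mode_scaler.
  rewrite (_ : e%:Z - (M%:Z - i%:Z) = (e + i)%N%:Z - M%:Z); last by rewrite PoszD; ring.
  rewrite hTb' ?scaler0 //; rewrite /D /I in hp hi; lia.
rewrite (@resY_fin _ _ A b a bt (- i%:Z) D); last first.
  move=> p hp; rewrite (_ : p%:Z - - i%:Z = (p + i)%N%:Z); last by rewrite PoszD; ring.
  by rewrite w2 //; rewrite /D in hp; lia.
rewrite (@resY_fin _ _ A c (\sum_(p < D) _) (E - bt) (M + N + i)%N%:Z D); last first.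
  move=> e he; rewrite mode_sumr big1 // => p _; rewrite mode_scaler.
  rewrite (_ : p%:Z - - i%:Z = (p + i)%N%:Z); last by rewrite PoszD; ring.
  rewrite hTc' ?scaler0 //; rewrite /D /I in he hi; lia.
transitivity (\sum_(p < D) \sum_(e < D) cf p e *: T1 p e i - (-1) ^+ N *: \sum_(p < D) \sum_(e < D) cf p e *: T2 p e i).
  rewrite scaler_sumr -sumrB; apply: eq_bigr => p _.
  rewrite scaler_sumr -sumrB; apply: eq_bigr => e _.
  by rewrite scalerBr !scalerA mulrC.
congr (_ - _ *: _).
  apply: eq_bigr => p _; rewrite mode_sumr scaler_sumr; apply: eq_bigr => e _.
  by rewrite mode_scaler scalerA /cf /T1.
rewrite exchange_big /=; apply: eq_bigr => e _.
rewrite mode_sumr scaler_sumr; apply: eq_bigr => p _.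
rewrite mode_scaler scalerA /cf /T2 mulrC; congr (_ *: md c _ (md b _ a)); rewrite PoszD; ring.
Qed.
End Rid.
Set Implicit Arguments.
Unset Strict Implicit.

Section OnLemmas.
Variables (F : fieldType) (V : lmodType F) (A : VOA V) (n : nat).
Local Notation md := (mode A).
Local Notation On := (On A n).

Lemma On0 : On 0.
Proof. by exists 0%N, (fun _ => 0), (fun _ => 0); split => [[]|]; rewrite ?big_ord0. Qed.

Lemma OnD x y : On x -> On y -> On (x + y).
Proof.
move=> [m1 [c1 [g1 [hg1 ->]]]] [m2 [c2 [g2 [hg2 ->]]]].
exists (m1 + m2)%N, (fun i => match split i with inl j => c1 j | inr j => c2 j end),
  (fun i => match split i with inl j => g1 j | inr j => g2 j end); split.
  by move=> i; case: (split i).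
rewrite big_split_ord /=; congr (_ + _); apply: eq_bigr => i _.
  by rewrite (unsplitK (inl _ i)).
by rewrite (unsplitK (inr _ i)).
Qed.

Lemma OnZ (a : F) x : On x -> On (a *: x).
Proof.
move=> [m [c [g [hg ->]]]]; exists m, (fun i => a * c i), g; split => //.
by rewrite scaler_sumr; apply: eq_bigr => i _; rewrite scalerA.
Qed.

Lemma OnN x : On x -> On (- x).
Proof. by move=> h; rewrite -scaleN1r; apply: OnZ. Qed.

Lemma OnB x y : On x -> On y -> On (x - y).
Proof. by move=> hx hy; apply: OnD => //; apply: OnN. Qed.

Lemma On_gen1 x : On_gen A n x -> On x.
Proof.
move=> h; exists 1%N, (fun _ => 1), (fun _ => x); split => //.
by rewrite big_ord_recl big_ord0 addr0 scale1r.
Qed.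

Lemma On_big (I : Type) (r : seq I) (P : pred I) (f : I -> V) :
  (forall i, P i -> On (f i)) -> On (\sum_(i <- r | P i) f i).
Proof.
move=> h; elim/big_rec: _ => [|i x Pi hx]; first exact: On0.
by apply: OnD => //; apply: h.
Qed.

Lemma On_fsum (f : nat -> V) : (forall i, On (f i)) -> On (fsum f).
Proof.
move=> h; rewrite /fsum; case: excluded_middle_informative => [H|H]; last exact: On0.
by apply: On_big => i _.
Qed.

End OnLemmas.

Section LinExt.
Variables (F : fieldType) (V : lmodType F) (A : VOA V).
Local Notation md := (mode A).

Lemma sum_supp_eq (g : int -> V) (s1 s2 : seq int) : uniq s1 -> uniq s2 ->
  (forall k, k \notin s1 -> g k = 0) -> (forall k, k \notin s2 -> g k = 0) ->
  \sum_(k <- s1) g k = \sum_(k <- s2) g k.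
Proof.
move=> u1 u2 h1 h2.
have e1 : \sum_(k <- s1) g k = \sum_(k <- s1 | k \in s2) g k.
  rewrite [RHS]big_mkcond; apply: eq_bigr => k _; case: ifP => // /negbT h.
  by rewrite h2.
have e2 : \sum_(k <- s2) g k = \sum_(k <- s2 | k \in s1) g k.
  rewrite [RHS]big_mkcond; apply: eq_bigr => k _; case: ifP => // /negbT h.
  by rewrite h1.
rewrite e1 e2 -[LHS]big_filter -[RHS]big_filter; apply: perm_big; apply: uniq_perm; rewrite ?filter_uniq //.
by move=> k; rewrite !mem_filter andbC.
Qed.

Lemma isumE (g : int -> V) (s : seq int) : uniq s ->
  (forall k, k \notin s -> g k = 0) -> isum g = \sum_(k <- s) g k.
Proof.
move=> us hs; rewrite /isum; case: excluded_middle_informative => [H|H]; last first.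
  by exfalso; apply: H; exists s.
case: (constructive_indefinite_description _ H) => s0 hs0 /=.
apply: sum_supp_eq => //; first exact: undup_uniq.
by move=> k; rewrite mem_undup; apply: hs0.
Qed.

Lemma proj_add k x y : proj A k (x + y) = proj A k x + proj A k y.
Proof. by have := proj_linear A k 1 x y; rewrite !scale1r. Qed.
Lemma proj0 k : proj A k 0 = 0.
Proof.
have := proj_add k 0 0; rewrite addr0 => h.
by have := congr1 (fun z => z - proj A k 0) h; rewrite addrK subrr => <-.
Qed.
Lemma proj_scale k (c : F) x : proj A k (c *: x) = c *: proj A k x.
Proof. by have := proj_linear A k c x 0; rewrite !addr0 proj0 addr0. Qed.

Lemma lin_extE (f : int -> V -> V -> V) (a b : V) (s : seq int) :
  (forall k, f k 0 b = 0) -> uniq s -> (forall k, k \notin s -> proj A k a = 0) ->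
  lin_ext A f a b = \sum_(k <- s) f k (proj A k a) b.
Proof. by move=> h0 us hs; rewrite /lin_ext (isumE us) // => k hk; rewrite hs. Qed.

Lemma lin_ext_homog (f : int -> V -> V -> V) (a b : V) (d : int) :
  (forall k, f k 0 b = 0) -> homog A d a -> lin_ext A f a b = f d a b.
Proof.
move=> h0 ha; rewrite (@lin_extE f a b [:: d]) // ?big_seq1 ?ha //.
move=> k; rewrite inE => hk; rewrite -ha proj_proj; case: eqP => // e.
by rewrite e eqxx in hk.
Qed.

Lemma lin_ext_add (f : int -> V -> V -> V) (x y b : V) :
  (forall k, f k 0 b = 0) -> (forall k u v, f k (u + v) b = f k u b + f k v b) ->
  lin_ext A f (x + y) b = lin_ext A f x b + lin_ext A f y b.
Proof.
move=> h0 hadd.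
have [sx [ux _ hx]] := proj_decomp A x.
have [sy [uy _ hy]] := proj_decomp A y.
set s := undup (sx ++ sy).
have us : uniq s by apply: undup_uniq.
have hx' : forall k, k \notin s -> proj A k x = 0.
  by move=> k; rewrite mem_undup mem_cat negb_or => /andP [h _]; apply: hx.
have hy' : forall k, k \notin s -> proj A k y = 0.
  by move=> k; rewrite mem_undup mem_cat negb_or => /andP [_ h]; apply: hy.
rewrite !(@lin_extE f _ b s) //; last by move=> k hk; rewrite proj_add hx' ?hy' ?addr0.
by rewrite -big_split /=; apply: eq_bigr => k _; rewrite proj_add hadd.
Qed.

Lemma lin_ext_scale (f : int -> V -> V -> V) (c : F) (x b : V) :
  (forall k, f k 0 b = 0) -> (forall k (c : F) u, f k (c *: u) b = c *: f k u b) ->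
  lin_ext A f (c *: x) b = c *: lin_ext A f x b.
Proof.
move=> h0 hsc.
have [sx [ux _ hx]] := proj_decomp A x.
rewrite !(@lin_extE f _ b sx) //; last by move=> k hk; rewrite proj_scale hx ?scaler0.
by rewrite scaler_sumr; apply: eq_bigr => k _; rewrite proj_scale hsc.
Qed.

Lemma lin_ext_sum (f : int -> V -> V -> V) (I : Type) (r : seq I) (w : I -> V) (b : V) :
  (forall k, f k 0 b = 0) -> (forall k u v, f k (u + v) b = f k u b + f k v b) ->
  lin_ext A f (\sum_(i <- r) w i) b = \sum_(i <- r) lin_ext A f (w i) b.
Proof.
move=> h0 hadd; elim: r => [|i r IH].
  rewrite !big_nil /lin_ext (@isumE _ [::]) ?big_nil // => k _; by rewrite proj0 h0.
by rewrite !big_cons lin_ext_add // IH.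
Qed.

Lemma fsupp_resY (u v : V) (K N : int) : exists B,
  fsupp (fun j => (binz K j)%:~R *: md u (j%:Z - N) v) B.
Proof.
have [T hT] := truncN A u v.
exists (T + `|N|)%N => j hj; rewrite hT ?scaler0 //.
have := lez_abs N; have : (T + `|N| <= j)%N := hj; move=> hj' hN.
have hj2 : (T%:Z + (`|N|%N)%:Z <= j%:Z) by rewrite -PoszD lez_nat.
lra.
Qed.

Lemma resY_addl x x' y K N : resY A (x + x') y K N = resY A x y K N + resY A x' y K N.
Proof.
have [B1 h1] := fsupp_resY x y K N; have [B2 h2] := fsupp_resY x' y K N.
rewrite /resY -(@fsum_add _ _ _ (maxn B1 B2)); last first.
- by apply: fsupp_mono h2 _; rewrite leq_maxr.
- by apply: fsupp_mono h1 _; rewrite leq_maxl.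
by apply: fsum_ext => j; rewrite mode_addl scalerDr.
Qed.

Lemma resY_addr x y y' K N : resY A x (y + y') K N = resY A x y K N + resY A x y' K N.
Proof.
have [B1 h1] := fsupp_resY x y K N; have [B2 h2] := fsupp_resY x y' K N.
rewrite /resY -(@fsum_add _ _ _ (maxn B1 B2)); last first.
- by apply: fsupp_mono h2 _; rewrite leq_maxr.
- by apply: fsupp_mono h1 _; rewrite leq_maxl.
by apply: fsum_ext => j; rewrite mode_addr scalerDr.
Qed.

Lemma resY_scalel (c : F) x y K N : resY A (c *: x) y K N = c *: resY A x y K N.
Proof.
have [B1 h1] := fsupp_resY x y K N.
rewrite /resY -(fsum_scale _ h1); apply: fsum_ext => j.
by rewrite mode_scalel !scalerA mulrC.
Qed.

Lemma resY0l y K N : resY A 0 y K N = 0.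
Proof. by have := resY_scalel 0 0 y K N; rewrite !scale0r. Qed.
Lemma resY0r x K N : resY A x 0 K N = 0.
Proof.
have := resY_addr x 0 0 K N; rewrite addr0 => h.
by have := congr1 (fun z => z - resY A x 0 K N) h; rewrite addrK subrr => <-.
Qed.

Lemma resY_sumr (I : Type) (r : seq I) (x : V) (w : I -> V) K N :
  resY A x (\sum_(i <- r) w i) K N = \sum_(i <- r) resY A x (w i) K N.
Proof.
elim: r => [|i r IH]; first by rewrite !big_nil resY0r.
by rewrite !big_cons resY_addr IH.
Qed.

End LinExt.

Set Implicit Arguments.
Unset Strict Implicit.

Section Main.
Variables (F : fieldType) (V : lmodType F) (A : VOA V) (n s t : nat).
Hypothesis hst : (s <= t)%N.
Local Notation md := (mode A).
Local Notation On := (On A n).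

Lemma star_h0 k y : star_h A n k 0 y = 0.
Proof. by rewrite /star_h big1 // => m _; rewrite resY0l scaler0. Qed.

Lemma star_h_add k u v y : star_h A n k (u + v) y = star_h A n k u y + star_h A n k v y.
Proof. by rewrite /star_h -big_split /=; apply: eq_bigr => m _; rewrite resY_addl scalerDr. Qed.

Lemma star_h_scale k (c : F) u y : star_h A n k (c *: u) y = c *: star_h A n k u y.
Proof.
rewrite /star_h scaler_sumr; apply: eq_bigr => m _.
by rewrite resY_scalel !scalerA mulrC.
Qed.

Lemma circ_homog (s' t' : nat) (b c : V) (db : int) : homog A db b ->
  circ A n s' t' b c = resY A b c (db + n%:Z + s'%:Z) (2 * n%:Z + 2 + t'%:Z).
Proof.
move=> hb; rewrite /circ (lin_ext_homog (d := db)) //.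
by move=> k; rewrite /circ_h resY0l.
Qed.

Lemma OnRes (x y : V) (d : int) (s' t' : nat) (K N : int) :
  homog A d x -> (s' <= t')%N -> K = d + n%:Z + s'%:Z -> N = 2 * n%:Z + 2 + t'%:Z ->
  On (resY A x y K N).
Proof.
move=> hx hst' -> ->; apply: On_gen1; left; exists x, y, s', t'; split => //.
by rewrite (@circ_homog s' t' x y d hx).
Qed.

Lemma homog_mode (da db : int) a b (k : int) : homog A da a -> homog A db b ->
  homog A (da + db - k - 1) (md a k b).
Proof. by move=> ha hb; rewrite /homog mode_deg. Qed.

Lemma OnL (da db : int) (a b c : V) (r M : nat) :
  homog A da a -> homog A db b -> (r <= M)%N ->
  On (resY A a (resY A b c (db + n%:Z + s%:Z) (2 * n%:Z + 2 + t%:Z)) (da + r%:Z - 1) M%:Z).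
Proof.
move=> ha hb hrM.
have eN : 2 * n%:Z + 2 + t%:Z = (2 * n + 2 + t)%N%:Z by lia.
rewrite eN Lid; apply: OnD.
  by apply: (@OnRes _ _ db s t) => //; rewrite eN.
apply: On_fsum => p; apply: OnZ; apply: On_fsum => q; apply: OnZ.
apply: (@OnRes _ _ (da + db - (q + p)%N%:Z - 1) (s + r + q) (t + M + q)).
- exact: homog_mode.
- lia.
- lia.
- lia.
Qed.

Lemma part1_left (a b c : V) (db : int) : homog A db b ->
  On (star A n a (circ A n s t b c)).
Proof.
move=> hb; rewrite (@circ_homog s t b c _ hb).
have [sa [ua _ hsa]] := proj_decomp A a.
rewrite /star (lin_extE (s := sa)) //; last by move=> k; apply: star_h0.
apply: On_big => k _; rewrite /star_h; apply: On_big => m _; apply: OnZ.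
have hk : homog A k (proj A k a) by rewrite /homog proj_proj eqxx.
have := @OnL k db (proj A k a) b c (n + 1) (n + m + 1) hk hb.
rewrite (_ : k + (n + 1)%N%:Z - 1 = k + n%:Z); last by rewrite PoszD; ring.
rewrite (_ : (n + m + 1)%N%:Z = n%:Z + m%:Z + 1); last by rewrite !PoszD.
apply; lia.
Qed.

Lemma OnR (a b c : V) (db dc : int) : homog A db b -> homog A dc c ->
  On (star A n (resY A b c (db + n%:Z + s%:Z) (2 * n%:Z + 2 + t%:Z)) a).
Proof.
move=> hb hc.
set N := (2 * n + 2 + t)%N.
have eN : 2 * n%:Z + 2 + t%:Z = N%:Z by rewrite /N; lia.
set bt := db + n%:Z + s%:Z.
rewrite eN.
have [B hB] := fsupp_resY A b c bt N%:Z.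
rewrite /resY (fsumE hB) /star lin_ext_sum; last first.
- by move=> k u v; apply: star_h_add.
- by move=> k; apply: star_h0.
set E := db + dc + N%:Z - 1 + n%:Z.
have e1 : forall j : 'I_B, lin_ext A (star_h A n) ((binz bt j)%:~R *: md b (j%:Z - N%:Z) c) a
   = \sum_(m < n.+1) ((-1) ^+ m * ('C(m + n, n))%:R) *:
        ((binz bt j)%:~R *: resY A (md b (j%:Z - N%:Z) c) a (E - j%:Z) (n + m + 1)%N%:Z).
  move=> j; rewrite lin_ext_scale; last first.
  - by move=> k c0 u; apply: star_h_scale.
  - by move=> k; apply: star_h0.
  rewrite (lin_ext_homog (d := db + dc - (j%:Z - N%:Z) - 1)); last first.
  - exact: homog_mode.
  - by move=> k; apply: star_h0.
  rewrite /star_h scaler_sumr; apply: eq_bigr => m _.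
  rewrite !scalerA [X in X *: _ = _]mulrC; congr (_ *: resY _ _ _ _ _).
  - rewrite /E; ring.
rewrite (eq_bigr _ (fun j _ => e1 j)) exchange_big /=.
apply: On_big => m _; rewrite -scaler_sumr; apply: OnZ.
set M := (n + m + 1)%N.
rewrite -(fsumE (f := fun j => (binz bt j)%:~R *: resY A (md b (j%:Z - N%:Z) c) a (E - j%:Z) M%:Z)); last first.
  move=> j hj; move: (hB j hj).
  case: (eqVneq ((binz bt j)%:~R : F) 0) => [-> | h0]; first by rewrite !scale0r.
  move/eqP; rewrite scaler_eq0 (negbTE h0) /= => /eqP ->.
  by rewrite resY0l scaler0.
rewrite Rid; apply: On_fsum => i; apply: OnZ; apply: OnB.
  apply: (@OnRes _ _ db s (t + i)) => //; first lia.
  by rewrite /N; lia.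
apply: OnZ.
apply: (@OnRes _ _ dc (n + 1 + t - s) (n + m + 1 + t + i)) => //; first lia.
  rewrite /E /bt -subzn; last by lia.
  rewrite /N; lia.
rewrite /M /N; lia.
Qed.

Lemma part1_right (a b c : V) (db : int) : homog A db b ->
  On (star A n (circ A n s t b c) a).
Proof.
move=> hb; rewrite (@circ_homog s t b c _ hb).
have [sc [uc ec hsc]] := proj_decomp A c.
rewrite ec resY_sumr /star lin_ext_sum; last first.
- by move=> k u v; apply: star_h_add.
- by move=> k; apply: star_h0.
apply: On_big => l _; apply: (@OnR a b (proj A l c) db l hb).
by rewrite /homog proj_proj eqxx.
Qed.

End Main.


Theorem mainTheorem3 (F : closedFieldType) (hF : (2%:R : F) != 0)
  (V : lmodType F) (A : VOA V) (n s t : nat) (hst : (s <= t)%N) :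
  (forall a b c : V, (exists db, homog A db b) ->
     On A n (star A n a (circ A n s t b c)) /\ On A n (star A n (circ A n s t b c) a))
  /\
  (forall (da db dc : int) (a b c : V), homog A da a -> homog A db b -> homog A dc c ->
     On A n (star A n a (circ A n s t b c)
        - \sum_(m < n.+1) ((-1) ^+ m * ('C(m + n, n))%:R) *:
            fsum (fun j => (binz (da + n%:Z) j)%:~R *:
              fsum (fun i => (binz (- n%:Z - m%:Z - 1) i)%:~R *:
                circ A n (i + n + 1 + s) (n + m + 1 + i + t) (mode A a (i%:Z + j%:Z) b) c)))
     /\
     On A n (resY A a (circ A n s t b c) (da - 1) 0
        - fsum (fun j => (binz (da - 1) j)%:~R *: circ A n s t (mode A a j%:Z b) c))).
Proof.
split.
  move=> a b c [db hb]; split; first exact: (part1_left n hst a c hb).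
  exact: (part1_right n hst a c hb).
move=> da db dc a b c ha hb hc; split.
  apply: OnB; first exact: (part1_left n hst a c hb).
  apply: On_big => m _; apply: OnZ; apply: On_fsum => j; apply: OnZ.
  apply: On_fsum => i; apply: OnZ; apply: On_gen1; left.
  by exists (mode A a (i%:Z + j%:Z) b), c, (i + n + 1 + s)%N, (n + m + 1 + i + t)%N; split => //; lia.
apply: OnB.
  rewrite (circ_homog n s t c hb).
  have := @OnL _ _ A n s t hst da db a b c 0 0 ha hb (leqnn 0).
  by rewrite addr0.
apply: On_fsum => j; apply: OnZ; apply: On_gen1; left.
by exists (mode A a j%:Z b), c, s, t.
Qed.
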